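(* Let $T:[0,1]\to[0,1]$ satisfy Condition 1. Suppose the set of distinct values among its slopes is $\{p\bar\Lambda_1,\dots,p\bar\Lambda_\ell\}$ with $\bar\Lambda_1<\dots<\bar\Lambda_\ell$, where $p\in\mathbb N$ and $\bar\Lambda_1,\dots,\bar\Lambda_\ell$ are pairwise relatively prime positive integers, and the slope $p\bar\Lambda_i$ occurs with multiplicity $m_i$ among the branches. Then $T$ is quantizable.
   Context: Let $I=[0,1]$. A map $T:I\to I$ satisfies Condition 1 if there are integers $\Lambda_1,\dots,\Lambda_l\geq 2$ (the slopes, one per branch) with $\sum_{j=1}^l\Lambda_j^{-1}=1$ and $I$ is divided into consecutive intervals $I_1,\dots,I_l$ with $|I_j|=\Lambda_j^{-1}$ such that on $I_j$, $T$ is affine with slope $\Lambda_j$ mapping $I_j$ onto $I$. For $N\in\mathbb N$ let $\mathcal M$ be the partition of $I$ into $E_i=[(i-1)/N,i/N]$, $i=1,\dots,N$. A sequence of such partitions $\mathcal M_\Bbbk$ with sizes $N_\Bbbk$ satisfies Condition 2 if each $N_{\Bbbk+1}/N_\Bbbk$ is an integer greater than one and every endpoint of every $I_j$ is an endpoint of an interval of $\mathcal M_1$. With $B_\Bbbk(i,j)=|E_i\cap T^{-1}E_j|/|E_i|$, $T$ is called quantizable if there is an infinite sequence $\mathcal M_\Bbbk$ satisfying Condition 2 such that for each $\Bbbk$ there is a unitary $N_\Bbbk\times N_\Bbbk$ matrix $U_\Bbbk$ with $B_\Bbbk(j,i)=|U_\Bbbk(i,j)|^2$ for all $i,j$. 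*)

(* Defs.v *)
From HB Require Import structures.
From mathcomp Require Import all_boot all_order all_algebra.
From mathcomp Require Import all_classical all_reals all_analysis.
From mathcomp Require Import complex.
Set Implicit Arguments. Unset Strict Implicit. Unset Printing Implicit Defensive.
Import Order.TTheory GRing.Theory Num.Theory.
Local Open Scope classical_set_scope.
Local Open Scope ring_scope.

Definition left_end (R : realType) (l : nat) (Lam : 'I_l -> nat) (j : 'I_l) : R :=
  \sum_(k < l | (k < j)%N) ((Lam k)%:R)^-1.

(* Condition 1.  T is given as a function R -> R; it maps [0,1] into [0,1], and
   on the interior of each I_j = [a_j, a_j + 1/Lambda_j] it is the increasing
   affine map of slope Lambda_j sending I_j onto [0,1]. *)
Definition condition1 (R : realType) (T : R -> R) (l : nat) (Lam : 'I_l -> nat) : Prop :=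
  [/\ (forall j, 2 <= Lam j)%N,
      \sum_(j < l) ((Lam j)%:R)^-1 = (1 : R),
      (forall x : R, 0 <= x <= 1 -> 0 <= T x <= 1) &
      (forall (j : 'I_l) (x : R),
          @left_end R _ Lam j < x < @left_end R _ Lam j + ((Lam j)%:R)^-1 ->
          T x = (Lam j)%:R * (x - @left_end R _ Lam j))].

Definition cell (R : realType) (N : nat) (i : nat) : set R :=
  `[ (i%:R / N%:R), (i.+1%:R / N%:R) ]%classic.

Definition Bmat (R : realType) (T : R -> R) (N : nat) (i j : 'I_N) : R :=
  fine (lebesgue_measure (@cell R N i `&` T @^-1` @cell R N j)) / (1 / N%:R).

(* Condition 2 for a sequence of partition sizes (N 0 = N_1, N 1 = N_2, ...). *)
Definition condition2 (R : realType) (l : nat) (Lam : 'I_l -> nat) (N : nat -> nat) : Prop :=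
  (0 < N 0)%N /\
  (forall k, (N k %| N k.+1)%N /\ (1 < N k.+1 %/ N k)%N) /\
  (forall j : 'I_l,
     (exists m : nat, (m <= N 0)%N /\ @left_end R _ Lam j = m%:R / (N 0)%:R) /\
     (exists m : nat, (m <= N 0)%N /\
        @left_end R _ Lam j + ((Lam j)%:R)^-1 = m%:R / (N 0)%:R)).

Definition unitary_mx (R : rcfType) (n : nat) (U : 'M[R[i]]_n) : Prop :=
  U *m (map_mx Num.conj U)^T = 1%:M.

Definition quantizable (R : realType) (T : R -> R) (l : nat) (Lam : 'I_l -> nat) : Prop :=
  exists N : nat -> nat, @condition2 R _ Lam N /\
    forall k, exists U : 'M[R[i]]_(N k), unitary_mx U /\
      forall i j : 'I_(N k), (Complex (Bmat T i j) 0 : R[i]) = `|U j i| ^+ 2.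

(* Main.v *)
Require Import Defs.
From HB Require Import structures.
From mathcomp Require Import all_boot all_order all_algebra.
From mathcomp Require Import all_classical all_reals all_analysis.
From mathcomp Require Import complex.
From mathcomp Require Import all_field.
From mathcomp Require Import cyclic cyclotomic.
From mathcomp Require Import ring lra.
From mathcomp Require Import zify.
Import Order.TTheory GRing.Theory Num.Theory.
Local Open Scope ring_scope.

Module Aux.
Set Implicit Arguments. Unset Strict Implicit. Unset Printing Implicit Defensive.
Section Roots.
Variable R : rcfType.
Local Notation C := (R[i]).

Lemma prim_exists (n : nat) : (0 < n)%N -> {z : C | n.-primitive_root z}.
Proof.
pose p : {poly C} := 'X^n - 1; have [r Dp] := closed_field_poly_normal p.
move=> n_gt0; apply/sigW; rewrite (monicP _) ?monicXnsubC // scale1r in Dp.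
have rn1: all n.-unity_root r by apply/allP=> z; rewrite -root_prod_XsubC -Dp.
have sz_r: (n < (size r).+1)%N.
  by rewrite -(size_prod_XsubC r id) -Dp size_XnsubC.
have [|z] := hasP (has_prim_root n_gt0 rn1 _ sz_r); last by exists z.
by rewrite -separable_prod_XsubC -Dp separable_Xn_sub_1 // pnatr_eq0 -lt0n.
Qed.

Lemma geom_sum0 (w : C) n : w ^+ n = 1 -> w != 1 -> \sum_(t < n) w ^+ t = 0.
Proof.
move=> wn w1.
have : (w - 1) * \sum_(t < n) w ^+ t = w ^+ n - 1.
  elim: n {wn} => [|n IH]; first by rewrite big_ord0 expr0 subrr mulr0.
  by rewrite big_ord_recr /= mulrDr IH exprS; ring.
rewrite wn subrr => /eqP; rewrite mulf_eq0 subr_eq0 (negPf w1) /=.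
by move/eqP.
Qed.

Lemma norm_unity (w : C) n : (0 < n)%N -> w ^+ n = 1 -> `|w| = 1.
Proof.
move=> n0 wn; apply/eqP; rewrite -(pexpr_eq1 n0 (normr_ge0 w)) //.
by rewrite -normrX wn normr1.
Qed.

Lemma conj_unity (w : C) n : (0 < n)%N -> w ^+ n = 1 -> w * w^* = 1.
Proof. by move=> n0 wn; rewrite -normCK (norm_unity n0 wn) expr1n. Qed.

End Roots.
Lemma sum_decomp (V : zmodType) p m (F : nat -> V) :
  \sum_(0 <= j < p * m) F j = \sum_(0 <= q < m) \sum_(0 <= s < p) F (p * q + s).
Proof.
elim: m => [|m IH]; first by rewrite muln0 !big_geq.
rewrite big_nat_recr //= -IH mulnS addnC (@big_cat_nat _ _ _ (p * m)) //=; last by rewrite leq_addr.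
congr (_ + _); rewrite -{1}[(p * m)%N]add0n big_addn addKn; apply: eq_bigr => s _; by rewrite addnC.
Qed.

Lemma sum_delta (V : zmodType) m r (X : V) : (r < m)%N ->
  \sum_(0 <= q < m) (if q == r then X else 0) = X.
Proof.
move=> rm; rewrite big_mkord (bigD1 (Ordinal rm)) //= eqxx big1 ?addr0 //.
by move=> i /negPf; rewrite -val_eqE /= => ->.
Qed.
Lemma sum_decomp2 (V : zmodType) p m (F : nat -> V) :
  \sum_(0 <= j < p * m) F j = \sum_(0 <= q < m) \sum_(s < p) F (p * q + s).
Proof. by rewrite sum_decomp; apply: eq_bigr => q _; rewrite big_mkord. Qed.

Section Core0.
Variable R : rcfType.
Local Notation C := (R[i]).

Definition zeta (n : nat) : C := sval (prim_exists R (ltn0Sn n.-1)).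
Lemma zetaP n : (0 < n)%N -> n.-primitive_root (zeta n).
Proof. by move=> n0; rewrite /zeta; case: prim_exists => z /=; rewrite prednK. Qed.

Lemma phase_sum (z : C) n a b : n.-primitive_root z -> (a < n)%N -> (b < n)%N ->
  \sum_(t < n) (z ^+ a * (z ^+ b)^*) ^+ t = if a == b then n%:R else 0.
Proof.
move=> pz an bn; have n0 : (0 < n)%N by apply: leq_ltn_trans an.
have zb1 : (z ^+ b) * (z ^+ b)^* = 1.
  apply: (@conj_unity _ _ n n0).
  by rewrite -exprM mulnC exprM (prim_expr_order pz) expr1n.
have [eab|ne] := eqVneq a b.
  subst a; rewrite zb1 (eq_bigr (fun _ => 1)) ?sumr_const ?card_ord //.
  by move=> t _; rewrite expr1n.
apply: geom_sum0.
  rewrite exprMn -rmorphXn -!exprM [(a * n)%N]mulnC [(b * n)%N]mulnC !exprM.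
  by rewrite (prim_expr_order pz) !expr1n rmorph1 mulr1.
apply/eqP => w1; move/negP: ne; apply.
have := congr1 (fun x => x * z ^+ b) w1.
rewrite mul1r -mulrA [(_^* * _)]mulrC zb1 mulr1 => /eqP.
by rewrite (eq_prim_root_expr pz) !modn_small.
Qed.

Lemma qsum (z : C) c M r r' (h1 h2 : nat) : c.-primitive_root z ->
  (h1 < c)%N -> (h2 < c)%N -> (r < M)%N ->
  \sum_(0 <= q < c * M) (if ((q %/ c)%N == r) && ((q %/ c)%N == r') then (z ^+ h1) ^+ q * ((z ^+ h2) ^+ q)^* else 0)
  = if (r == r') && (h1 == h2) then c%:R else 0.
Proof.
move=> pz h1c h2c rM; have c0 : (0 < c)%N by apply: leq_ltn_trans h1c.
rewrite sum_decomp2.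
have dq R0 t : (t < c)%N -> ((c * R0 + t) %/ c)%N = R0.
  by move=> tc; rewrite mulnC divnMDl // divn_small // addn0.
under eq_bigr => R0 _ do under eq_bigr => t _ do rewrite dq //.
have [er|ner] := eqVneq r r'; last first.
  rewrite big1 //= => R0 _; rewrite big1 // => t _.
  by case: eqP => // ->; rewrite (negPf ner).
subst r'.
rewrite (eq_bigr (fun R0 => if R0 == r then \sum_(t < c) (z ^+ h1) ^+ (c * R0 + t) * ((z ^+ h2) ^+ (c * R0 + t))^* else 0)); last first.
  by move=> R0 _; rewrite andbb; case: eqP => //; rewrite big1.
rewrite big_mkord (bigD1 (Ordinal rM)) //= eqxx.
rewrite [X in _ + X]big1 ?addr0; last by move=> i /negPf; rewrite -val_eqE /= => ->.
rewrite -(phase_sum pz h1c h2c).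
apply: eq_bigr => t _.
rewrite rmorphXn -exprMn exprD exprM.
suff -> : (z ^+ h1 * (z ^+ h2)^*) ^+ c = 1 by rewrite expr1n mul1r.
rewrite exprMn -rmorphXn -!exprM [(h1 * c)%N]mulnC [(h2 * c)%N]mulnC !exprM.
by rewrite (prim_expr_order pz) !expr1n rmorph1 mulr1.
Qed.

End Core0.
Section Core.
Variable R : rcfType.
Local Notation C := (R[i]).
Variables (l : nat) (Lam : 'I_l -> nat) (N p : nat) (g h : 'I_l -> nat).
Hypotheses (hp : (0 < p)%N) (hpL : forall b, (p %| Lam b)%N) (hLpos : forall b, (0 < Lam b)%N)
  (hLN : forall b, (Lam b %| N)%N) (hg : forall b, (g b < p)%N) (hh : forall b, (h b < Lam b %/ p)%N)
  (hgh : forall b b', b != b' -> g b = g b' -> Lam b = Lam b' /\ h b != h b').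

Definition cc b := (Lam b %/ p)%N.
Definition ph b (j : nat) : C :=
  zeta R p ^+ (g b * (j %% p)) * zeta R (cc b) ^+ (h b * (j %/ p)).
Definition sq b : C := sqrtC ((Lam b)%:R).
Definition E b (r j : nat) : C := if (j %/ Lam b == r)%N then ph b j / sq b else 0.

Lemma Lc b : Lam b = (p * cc b)%N.
Proof. by rewrite /cc mulnC divnK. Qed.

Lemma ccpos b : (0 < cc b)%N.
Proof. by have := hLpos b; rewrite Lc muln_gt0 => /andP[]. Qed.

Lemma E_pq b r q s : (s < p)%N -> E b r (p * q + s) =
  if (q %/ cc b == r)%N then (zeta R p ^+ g b) ^+ s * (zeta R (cc b) ^+ h b) ^+ q / sq b else 0.
Proof.
move=> sp; have d : ((p * q + s) %/ p = q)%N.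
  by rewrite mulnC divnMDl // divn_small // addn0.
by rewrite /E /ph {1}Lc divnMA d (mulnC p q) modnMDl modn_small // !exprM.
Qed.

Lemma term_split (P P' : bool) (a a' X X' d d' : C) :
  (if P then a * X / d else 0) * (if P' then a' * X' / d' else 0)^* =
  (a * a'^*) * (if P && P' then X * X'^* / (d * d'^*) else 0).
Proof.
case: P; case: P' => /=; rewrite ?rmorph0 ?mulr0 ?mul0r //.
by rewrite !rmorphM fmorphV invfM; ring.
Qed.


Lemma if_div (P : bool) (X d : C) : (if P then X / d else 0) = (if P then X else 0) / d.
Proof. by case: P; rewrite ?mul0r. Qed.

Lemma sq_conj b : sq b * (sq b)^* = (Lam b)%:R.
Proof.
rewrite /sq geC0_conj ?sqrtC_ge0 ?ler0n // -expr2 sqrtCK //.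
Qed.

Lemma rows_orth b b' r r' : (r < N %/ Lam b)%N -> (r' < N %/ Lam b')%N ->
  \sum_(j < N) E b r j * (E b' r' j)^* = if (b == b') && (r == r') then 1 else 0.
Proof.
move=> rb rb'.
have Np : N = (p * (N %/ p))%N by rewrite mulnC divnK // (dvdn_trans (hpL b) (hLN b)).
rewrite -(big_mkord xpredT (fun j => E b r j * (E b' r' j)^*)) {1}Np sum_decomp2.
pose Y q := if ((q %/ cc b)%N == r) && ((q %/ cc b')%N == r') then
   (zeta R (cc b) ^+ h b) ^+ q * ((zeta R (cc b') ^+ h b') ^+ q)^* / (sq b * (sq b')^*) else 0.
have inner q : \sum_(s < p) E b r (p * q + s) * (E b' r' (p * q + s))^* =
   (if g b == g b' then p%:R else 0) * Y q.
  rewrite -(phase_sum (zetaP R hp) (hg b) (hg b')) mulr_suml; apply: eq_bigr => s _.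
  rewrite !E_pq ?ltn_ord // term_split; congr (_ * _).
  by rewrite exprMn rmorphXn.
rewrite (eq_bigr _ (fun q _ => inner q)) -mulr_sumr.
have [eg|neg] := eqVneq (g b) (g b'); last first.
  have nb : b != b' by apply: contraNneq neg => ->.
  by rewrite mul0r (negPf nb).
have [eL heq] : Lam b' = Lam b /\ (h b == h b') = (b == b').
  have [ebb|nbb] := eqVneq b b'; first by subst b'; rewrite eqxx.
  by have [-> /negPf ->] := hgh nbb eg.
have ec : cc b' = cc b by rewrite /cc eL.
have es : sq b' = sq b by rewrite /sq eL.
have NpL : (N %/ p = cc b * (N %/ Lam b))%N.
  have eN : N = (p * (cc b * (N %/ Lam b)))%N by rewrite mulnA -Lc mulnC divnK.
  by rewrite {1}eN mulKn.
rewrite NpL /Y ec es.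
under eq_bigr => q _ do rewrite if_div.
rewrite -mulr_suml qsum ?(zetaP R (ccpos b)) ?hh //; last by rewrite -ec /cc; apply: hh.
rewrite heq andbC; case: ifP => _; last by rewrite mul0r mulr0.
by rewrite sq_conj Lc natrM mulrA divff // mulf_neq0 // pnatr_eq0 -lt0n ?ccpos.
Qed.


Hypothesis hsumN : (\sum_(k < l) N %/ Lam k)%N = N.

Definition Aof (b : 'I_l) := (\sum_(k < l | (k < b)%N) N %/ Lam k)%N.
Definition inb b (i : nat) := (Aof b <= i < Aof b + N %/ Lam b)%N.

Lemma Amono (b : 'I_l) (t : nat) : (b < t)%N ->
  (Aof b + N %/ Lam b <= \sum_(k < l | (k < t)%N) N %/ Lam k)%N.
Proof.
move=> it; rewrite (bigID (fun j : 'I_l => (j < b)%N)) /=; apply: leq_add.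
  rewrite (eq_bigl (fun j : 'I_l => (j < b)%N)) // => j.
  by apply/andb_idl => /ltn_trans; apply.
by rewrite (bigD1 b) /= ?it ?ltnn //; apply: leq_addr.
Qed.

Lemma inb_uniq b b' i : inb b i -> inb b' i -> b = b'.
Proof.
wlog lt : b b' / (b <= b')%N.
  move=> H ib ib'; have [le|ge] := leqP b b'; first exact: H.
  by apply/esym/H => //; apply: ltnW.
move=> /andP[_ i1] /andP[i2 _]; apply/val_inj/eqP; rewrite eqn_leq lt /=.
rewrite leqNgt; apply/negP => bb.
have := leq_trans (leq_trans i1 (Amono bb)) i2.
by rewrite ltnn.
Qed.

Lemma cover n : (n <= l)%N -> forall i,
  (i < \sum_(k < l | (k < n)%N) N %/ Lam k)%N -> exists b, inb b i.
Proof.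
elim: n => [_ i|n IH nl i].
  by rewrite big_pred0 // => k; rewrite ltn0.
have nl' : (n < l)%N by [].
rewrite (bigD1 (Ordinal nl')) //=.
rewrite (eq_bigl (fun k : 'I_l => (k < n)%N)); last first.
  by move=> k; rewrite ltnS -val_eqE /= andbC -ltn_neqAle.
move=> ilt; have [ilt2|ige] := ltnP i (\sum_(k < l | (k < n)%N) N %/ Lam k).
  exact: IH (ltnW nl') _ ilt2.
by exists (Ordinal nl'); rewrite /inb /Aof /= ige addnC ilt.
Qed.

Lemma inb_exists i : (i < N)%N -> exists b, inb b i.
Proof.
move=> iN; apply: (cover (leqnn l)).
by rewrite (eq_bigl xpredT) ?hsumN // => k; rewrite ltn_ord.
Qed.

Definition brn (i : nat) : option 'I_l := [pick b | inb b i].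

Lemma brn_some i b : inb b i -> brn i = Some b.
Proof.
move=> ib; rewrite /brn; case: pickP => [b' ib'|/(_ b)]; last by rewrite ib.
by rewrite (inb_uniq ib' ib).
Qed.

Definition Vm : 'M[C]_N :=
  \matrix_(i < N, j < N) (if brn i is Some b then E b (i - Aof b) j else 0).

Lemma inb_r b i : inb b i -> (i - Aof b < N %/ Lam b)%N.
Proof. by move=> /andP[i1 i2]; rewrite ltn_subLR // addnC. Qed.

Lemma Vm_unitary : Vm *m (map_mx Num.conj Vm)^T = 1%:M.
Proof.
apply/matrixP => i i'; rewrite !mxE.
have [b ib] := inb_exists (ltn_ord i).
have [b' ib'] := inb_exists (ltn_ord i').
rewrite (eq_bigr (fun j : 'I_N => E b (i - Aof b) j * (E b' (i' - Aof b') j)^*)); last first.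
  by move=> j _; rewrite !mxE (brn_some ib) (brn_some ib').
rewrite rows_orth ?inb_r //.
have [ebb|nbb] := eqVneq b b'.
  subst b'; move: ib ib' => /andP[i1 _] /andP[i2 _].
  by rewrite /= eqn_sub2rE // val_eqE; case: (i == i').
have -> : (i == i') = false.
  apply/negP => /eqP eii; subst i'.
  by move: nbb; rewrite (inb_uniq ib ib') eqxx.
by [].
Qed.


Lemma Vm_norm (i j : 'I_N) b : inb b i ->
  `|Vm i j| ^+ 2 = if (j %/ Lam b == i - Aof b)%N then ((Lam b)%:R)^-1 else 0.
Proof.
move=> ib; rewrite mxE (brn_some ib) normCK /E.
case: ifP => _; last by rewrite mul0r.
have z1 n : (0 < n)%N -> `|zeta R n| = 1.
  by move=> n0; apply: (norm_unity n0); apply: prim_expr_order; apply: zetaP.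
have phn : `|ph b j| = 1.
  by rewrite /ph normrM !normrX z1 // z1 ?ccpos // !expr1n mulr1.
by rewrite rmorphM fmorphV mulf_div sq_conj -normCK phn expr1n mul1r.
Qed.

End Core.
Lemma nt_core (R : realType) ell (L : 'I_ell -> nat) (m : 'I_ell -> nat) p :
  (forall i, 0 < L i)%N -> (forall i j, i != j -> coprime (L i) (L j)) ->
  \sum_i (m i)%:R / (L i)%:R = (p%:R : R) ->
  (forall i, L i %| m i)%N /\ (\sum_i (m i %/ L i) = p)%N.
Proof.
move=> Lpos Lcop hs.
pose P := (\prod_i L i)%N.
pose Q i := (\prod_(i' | i' != i) L i')%N.
have PQ i : P = (L i * Q i)%N by rewrite /P (bigD1 i).
have LQ i i' : i != i' -> (L i %| Q i')%N.
  by move=> ne; rewrite /Q (bigD1 i) //=; apply: dvdn_mulr.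
have natEq : (\sum_i m i * Q i = p * P)%N.
  apply/eqP; rewrite -(eqr_nat R) natr_sum natrM -hs mulr_suml; apply/eqP.
  apply: eq_bigr => i _; rewrite (PQ i) !natrM mulrA divfK //.
  by rewrite pnatr_eq0 -lt0n.
have dv i : (L i %| m i)%N.
  have cQ : coprime (L i) (Q i).
    rewrite /Q; apply: (big_ind (fun x => coprime (L i) x)) => //.
    - exact: coprimen1.
    - by move=> x y cx cy; rewrite coprimeMr cx cy.
    - by move=> i' ne; apply: Lcop; rewrite eq_sym.
  rewrite -(Gauss_dvdl _ cQ).
  have : (L i %| \sum_i m i * Q i)%N by rewrite natEq (PQ i); apply: dvdn_mull; apply: dvdn_mulr.
  rewrite (bigD1 i) //= dvdn_addl //; apply: dvdn_sum => i' ne.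
  by apply: dvdn_mull; apply: LQ; rewrite eq_sym.
split => //; apply/eqP; rewrite -(eqr_nat R) natr_sum -hs; apply/eqP.
apply: eq_bigr => i _; rewrite -{2}(divnK (dv i)) natrM mulfK //.
by rewrite pnatr_eq0 -lt0n.
Qed.

Lemma assignment (R : realType) l (Lam : 'I_l -> nat) p ell (Lbar : 'I_ell -> nat) :
  \sum_(j < l) ((Lam j)%:R)^-1 = (1 : R) -> (0 < p)%N ->
  (forall i, 0 < Lbar i)%N -> (forall i j : 'I_ell, (i < j)%N -> (Lbar i < Lbar j)%N) ->
  (forall i j : 'I_ell, i != j -> coprime (Lbar i) (Lbar j)) ->
  (forall j : 'I_l, exists i : 'I_ell, Lam j = (p * Lbar i)%N) ->
  exists g h : 'I_l -> nat,
   [/\ forall b, (g b < p)%N, forall b, (h b < Lam b %/ p)%N &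
       forall b b', b != b' -> g b = g b' -> Lam b = Lam b' /\ h b != h b'].
Proof.
move=> hs hp Lpos Linc Lcop hv.
have [cls hcls] := fin_all_exists hv.
pose m i := #|[pred b | cls b == i]|.
have pn0 : (p%:R : R) != 0 by rewrite pnatr_eq0 -lt0n.
have Ln0 i : ((Lbar i)%:R : R) != 0 by rewrite pnatr_eq0 -lt0n.
have hsum : \sum_i (m i)%:R / (Lbar i)%:R = (p%:R : R).
  have h1 : \sum_i (m i)%:R / (p * Lbar i)%:R = (1:R).
    rewrite -[RHS]hs (partition_big cls xpredT) //=; apply: eq_bigr => i _.
    have -> : \sum_(j < l | cls j == i) ((Lam j)%:R)^-1 = \sum_(j < l | cls j == i) ((p * Lbar i)%:R : R)^-1.
      by apply: eq_bigr => j /eqP <-; rewrite hcls.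
    by rewrite (eq_bigl (fun j => j \in [pred j | cls j == i])) // sumr_const mulrC mulr_natr.
  rewrite (_ : \sum_i (m i)%:R / (Lbar i)%:R = (\sum_i (m i)%:R / (p * Lbar i)%:R) * p%:R).
    by rewrite h1 mul1r.
  rewrite mulr_suml; apply: eq_bigr => i _.
  by rewrite natrM invfM mulrA mulrAC divfK.
have [dv ks] := nt_core Lpos Lcop hsum.
pose k i := (m i %/ Lbar i)%N.
pose G (i : 'I_ell) := (\sum_(j < ell | (j < i)%N) k j)%N.
pose n b := #|[pred b' | (cls b' == cls b) && (b' < b)%N]|.
have Gmono (i : 'I_ell) (t : nat) : (i < t)%N -> (G i + k i <= \sum_(j < ell | (j < t)%N) k j)%N.
  move=> it; rewrite (bigID (fun j : 'I_ell => (j < i)%N)) /=; apply: leq_add.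
    rewrite (eq_bigl (fun j : 'I_ell => (j < i)%N)) // => j.
    by apply/andb_idl => /ltn_trans; apply.
  by rewrite (bigD1 i) /= ?it ?ltnn //; apply: leq_addr.
have nlt b : (n b < m (cls b))%N.
  apply: proper_card; apply/properP; split.
    by apply/fintype.subsetP => x; rewrite !inE => /andP[].
  by exists b; rewrite !inE ?eqxx // ltnn andbF.
have nmono b b' : cls b = cls b' -> (b < b')%N -> (n b < n b')%N.
  move=> cb bb; apply: proper_card; apply/properP; split.
    apply/fintype.subsetP => x; rewrite !inE cb => /andP[-> xb] /=.
    exact: ltn_trans xb bb.
  by exists b; rewrite !inE ?cb ?eqxx ?bb // ltnn andbF.
have gbound b : (n b %/ Lbar (cls b) < k (cls b))%N.
  by rewrite ltn_divLR // divnK.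
have Gp i : (G i + k i <= p)%N.
  rewrite -ks; apply: leq_trans (Gmono i ell (ltn_ord i)) _; apply: eq_leq.
  by apply: eq_bigl => j; exact: ltn_ord.
exists (fun b => addn (G (cls b)) (divn (n b) (Lbar (cls b)))), (fun b => modn (n b) (Lbar (cls b))).
split.
- move=> b; apply: leq_trans (Gp (cls b)); by rewrite ltn_add2l.
- by move=> b; rewrite hcls mulKn // ltn_pmod.
move=> b b' nbb' /= eqg.
have ecls : cls b = cls b'.
  apply/eqP; apply: contraT => ne.
  wlog lt : b b' eqg ne nbb' / (cls b < cls b')%N.
    move=> H; have [lt|gt|eq] := ltngtP (cls b) (cls b'); first exact: H lt.
      apply: (H b' b) => //; by rewrite eq_sym.
    by move: ne; rewrite -val_eqE /= eq eqxx.
  have := Gmono (cls b) (cls b') lt.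
  have := gbound b.
  move: eqg; set x := (n b %/ _)%N; set y := (n b' %/ _)%N => eqg.
  move=> xk Gle; have : (G (cls b) + x < G (cls b'))%N.
    apply: leq_trans Gle; by rewrite ltn_add2l.
  by rewrite eqg ltnNge leq_addr.
split; first by rewrite !hcls ecls.
apply/negP => /eqP eqh.
have eqn : n b = n b'.
  move: eqg; rewrite ecls => /addnI eqd.
  by rewrite (divn_eq (n b) (Lbar (cls b'))) (divn_eq (n b') (Lbar (cls b'))) eqd -ecls eqh ecls.
have [lt|gt|eq] := ltngtP b b'.
- by move: (nmono _ _ ecls lt); rewrite eqn ltnn.
- by move: (nmono _ _ (esym ecls) gt); rewrite eqn ltnn.
- by move: nbb'; rewrite -val_eqE /= eq eqxx.
Qed.
Section BmatSec.
Local Open Scope classical_set_scope.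
Lemma sub1_meas (R : realType) (A : set R) (e : R) : A `<=` [set e] -> measurable A.
Proof.
move=> Ae; have [Aee|nAe] := pselect (A e).
  have -> : A = [set e] by apply/seteqP; split => // x /= ->.
  exact: measurable_set1.
have -> : A = set0 by apply/seteqP; split => // x /[dup] /Ae /= -> /nAe.
exact: measurable0.
Qed.

Lemma ndiv_le (R : realType) (D : R) (x y : nat) : 0 < D ->
  (x%:R / D <= y%:R / D) = (x <= y)%N.
Proof. by move=> D0; rewrite ler_pM2r ?invr_gt0 // ler_nat. Qed.

Lemma ndiv_lt (R : realType) (D : R) (x y : nat) : 0 < D ->
  (x%:R / D < y%:R / D) = (x < y)%N.
Proof. by move=> D0; rewrite ltr_pM2r ?invr_gt0 // ltr_nat. Qed.

Lemma Bmat_val (R : realType) (T : R -> R) l (Lam : 'I_l -> nat) (hT : condition1 T Lam)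
  (N : nat) (b : 'I_l) (A : nat) (i j : 'I_N) :
  (Lam b %| N)%N -> @left_end R _ Lam b = A%:R / N%:R ->
  (A <= i < A + N %/ Lam b)%N ->
  Bmat T i j = if (j %/ Lam b == i - A)%N then ((Lam b)%:R)^-1 else 0.
Proof.
move=> LN hA hi.
have N0 : (0 < N)%N by apply: leq_ltn_trans (ltn_ord i).
case: hT => L2 _ _ hTx.
set La := Lam b in LN hi hA *.
have L0 : (0 < La)%N by apply: leq_trans (L2 b).
set n : R := N%:R; set L : R := La%:R; set D := n * L.
have n0 : 0 < n by rewrite ltr0n.
have Lp : 0 < L by rewrite ltr0n.
have D0 : 0 < D by rewrite mulr_gt0.
have nn0 : n != 0 by rewrite gt_eqF.
have Ln0 : L != 0 by rewrite gt_eqF.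
pose r := (i - A)%N.
have eiA : (i = A + r :> nat)%N by rewrite /r subnKC //; case/andP: hi.
have eN : (N = N %/ La * La)%N by rewrite divnK.
set e1 := (i%:R / n); set e2 := (i.+1%:R / n).
set a := A%:R / n.
set lo := (A * La + j)%:R / D; set hi' := (A * La + j.+1)%:R / D.
have e1D : e1 = (i * La)%:R / D by rewrite /e1 /D natrM; field; apply/andP.
have e2D : e2 = (i.+1 * La)%:R / D by rewrite /e2 /D natrM; field; apply/andP.
have aD : a = (A * La)%:R / D by rewrite /a /D natrM; field; apply/andP.
have aRD : a + L^-1 = (A * La + N)%:R / D by rewrite /a /D natrD natrM /n; field; apply/andP.
have K1 x : e1 < x < e2 -> T x = L * (x - a).
  move=> /andP[x1 x2]; rewrite /a -hA; apply: hTx; rewrite hA -/a.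
  apply/andP; split.
    apply: le_lt_trans x1; rewrite aD e1D ndiv_le //; apply: leq_mul => //; by case/andP: hi.
  apply: (lt_le_trans x2); rewrite aRD e2D ndiv_le //.
  rewrite {2}eN -mulnDl leq_mul2r; apply/orP; right.
  by case/andP: hi.
have K2 x : e1 < x < e2 -> (cell N j (T x) <-> lo <= x <= hi').
  move=> ex; rewrite /cell /= in_itv /= (K1 _ ex).
  have E1 : j%:R / N%:R = (lo - a) * L.
    by rewrite /lo aD /D -mulrBl -natrB ?leq_addr // addKn -/n; field; apply/andP.
  have E2 : j.+1%:R / N%:R = (hi' - a) * L.
    by rewrite /hi' aD /D -mulrBl -natrB ?leq_addr // addKn -/n; field; apply/andP.
  rewrite E1 E2 ![L * _]mulrC !ler_pM2r // !lerD2r.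
  by split.
have celli x : cell N i x <-> e1 <= x <= e2 by rewrite /cell /= in_itv.
set S := cell N i `&` T @^-1` cell N j.
have Sdec : S = (`]e1, e2[ `&` `[lo, hi']) `|` (S `&` [set e1]) `|` (S `&` [set e2]).
  apply/seteqP; split => x.
    move=> [xi xj]; have /andP[x1 x2] := iffLR (celli x) xi.
    move: x1 x2; rewrite !le_eqVlt => /predU1P[ex|x1] /predU1P[ex'|x2].
    - by left; right; split => //.
    - by left; right; split => //.
    - by right; split => //.
    - left; left; split; first by rewrite /= in_itv /= x1 x2.
      by rewrite /= in_itv /=; apply/(K2 x); rewrite ?x1 ?x2.
  move=> [[[]|[]]|[]] //.
  move=> xa xb; move: xa xb; rewrite /= !in_itv /= => /andP[x1 x2] xb.
  split; first by apply/celli; rewrite !ltW.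
  by apply/(K2 x) => //; rewrite x1 x2.
have mS : measurable S.
  rewrite Sdec; apply: measurableU; first apply: measurableU.
  - by apply: measurableI; apply: measurable_itv.
  - by apply: (@sub1_meas _ _ e1) => x [].
  - by apply: (@sub1_meas _ _ e2) => x [].
have blk : (j %/ La == r)%N = (r * La <= j < r * La + La)%N.
  by rewrite eqn_leq andbC leq_divRL // -[(j %/ La <= r)%N]ltnS ltn_divLR // mulSnr.
rewrite /Bmat -/S blk.
have lohi : lo < hi' by rewrite /lo /hi' ndiv_lt // addnS.
have mitv1 : lebesgue_measure (`]lo, hi'[ : set R) = (hi' - lo)%:E.
  by rewrite lebesgue_measure_itv /= lte_fin lohi -EFinD.
have mitv2 : lebesgue_measure (`[lo, hi'] : set R) = (hi' - lo)%:E.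
  by rewrite lebesgue_measure_itv /= lte_fin lohi -EFinD.
have m1 (e : R) : lebesgue_measure [set e] = 0%E by apply: lebesgue_measure_set1.
have ml (X Y : set R) : measurable X -> measurable Y -> X `<=` Y ->
    (lebesgue_measure X <= lebesgue_measure Y)%E.
  by move=> mX mY XY; apply: le_measure => //; rewrite inE.
have mU (X Y : set R) : measurable X -> measurable Y ->
    (lebesgue_measure (X `|` Y) <= lebesgue_measure X + lebesgue_measure Y)%E.
  by move=> mX mY; apply: measureU2.
case: ifP => hb.
  move/andP: hb => [hb1 hb2].
  have elo : e1 <= lo by rewrite e1D /lo ndiv_le //; rewrite eiA mulnDl; lia.
  have ehi : hi' <= e2 by rewrite e2D /hi' ndiv_le //; rewrite eiA mulSnr mulnDl; lia.
  have sub1 : `]lo, hi'[ `<=` S.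
    move=> x; rewrite /= in_itv /= => /andP[x1 x2]; split.
      by apply/celli; apply/andP; split; [exact: le_trans elo (ltW x1) | exact: le_trans (ltW x2) ehi].
    apply/(K2 x); first by rewrite (le_lt_trans elo x1) (lt_le_trans x2 ehi).
    by rewrite !ltW.
  have sub2 : S `<=` `[lo, hi'] `|` [set e1] `|` [set e2].
    rewrite {1}Sdec => x [[[xa xb]|[_ ->]]|[_ ->]]; [left; left | left; right | right] => //.
  have muS : lebesgue_measure S = (hi' - lo)%:E.
    apply/eqP; rewrite eq_le; apply/andP; split; last first.
      by rewrite -mitv1; apply: ml => //; apply: measurable_itv.
    apply: le_trans (ml _ _ mS _ sub2) _.
      by apply: measurableU; [apply: measurableU; [apply: measurable_itv|]|]; apply: measurable_set1.
    apply: le_trans (mU _ _ _ _) _.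
    - by apply: measurableU; [apply: measurable_itv|apply: measurable_set1].
    - by apply: measurable_set1.
    rewrite m1 adde0; apply: le_trans (mU _ _ _ _) _.
    - by apply: measurable_itv.
    - by apply: measurable_set1.
    by rewrite m1 adde0 mitv2.
  rewrite muS /= /hi' /lo -mulrBl -natrB; last by rewrite leq_add2l.
  rewrite addnS subSn // subnn /D -/n; field; apply/andP; split => //.
have sub3 : S `<=` [set e1] `|` [set e2].
  rewrite {1}Sdec => x [[[xa xb]|[_ ->]]|[_ ->]]; [ | left | right] => //.
  move: xa xb; rewrite /= !in_itv /= => /andP[x1 x2] /andP[x3 x4].
  move/negbT: hb; rewrite negb_and -!ltnNge => /orP[hb|hb].
    have : hi' <= e1 by rewrite e1D /hi' ndiv_le //; rewrite eiA mulnDl; lia.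
    by move=> h1; have := le_lt_trans (le_trans x4 h1) x1; rewrite ltxx.
  have : e2 <= lo by rewrite e2D /lo ndiv_le //; rewrite eiA mulSnr mulnDl; lia.
  by move=> h1; have := lt_le_trans x2 (le_trans h1 x3); rewrite ltxx.
have muS : lebesgue_measure S = 0%E.
  apply/eqP; rewrite eq_le measure_ge0 andbT.
  apply: le_trans (ml _ _ mS _ sub3) _.
    by apply: measurableU; apply: measurable_set1.
  apply: le_trans (mU _ _ _ _) _; try apply: measurable_set1.
  by rewrite !m1 adde0.
by rewrite muS /= mul0r.
Qed.
End BmatSec.
End Aux.
Import Aux.

Theorem theorem4 (R : realType) (T : R -> R) (l : nat) (Lam : 'I_l -> nat)
  (hT : condition1 T Lam)
  (p : nat) (ell : nat) (Lbar : 'I_ell -> nat)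
  (hp : (0 < p)%N)
  (hLbar_pos : forall i, (0 < Lbar i)%N)
  (hLbar_incr : forall i j : 'I_ell, (i < j)%N -> (Lbar i < Lbar j)%N)
  (hLbar_coprime : forall i j : 'I_ell, i != j -> coprime (Lbar i) (Lbar j))
  (hvals : (forall j : 'I_l, exists i : 'I_ell, Lam j = (p * Lbar i)%N) /\
           (forall i : 'I_ell, exists j : 'I_l, Lam j = (p * Lbar i)%N)) :
  quantizable T Lam.
Proof.
case: (hT) => L2 hsum _ _.
have Lpos b : (0 < Lam b)%N by apply: leq_trans (L2 b).
have [g [h [hg hh hgh]]] :=
  assignment hsum hp hLbar_pos hLbar_incr hLbar_coprime hvals.1.
have hpL b : (p %| Lam b)%N by have [i ->] := hvals.1 b; apply: dvdn_mulr.
pose M := (\prod_(b < l) Lam b)%N.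
have M0 : (0 < M)%N by rewrite prodn_gt0.
have LM b : (Lam b %| M)%N by rewrite /M (bigD1 b) //=; apply: dvdn_mulr.
have Ln0 k : ((Lam k)%:R : R) != 0 by rewrite pnatr_eq0 -lt0n.
have hsN N : (forall b, Lam b %| N)%N -> (\sum_(k < l) N %/ Lam k)%N = N.
  move=> dv; apply/eqP; rewrite -(eqr_nat R) natr_sum.
  apply/eqP; apply: (@eq_trans _ _ (N%:R * \sum_(k < l) ((Lam k)%:R : R)^-1)); last first.
    by rewrite hsum mulr1.
  by rewrite mulr_sumr; apply: eq_bigr => k _; rewrite natf_div.
have hle N b : (forall b, Lam b %| N)%N -> (0 < N)%N ->
    @left_end R _ Lam b = (Aof Lam N b)%:R / N%:R.
  move=> dv N0; rewrite /left_end /Aof natr_sum mulr_suml; apply: eq_bigr => k _.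
  rewrite natf_div // mulrAC divff ?mul1r // pnatr_eq0 -lt0n //.
have Ale j : (Aof Lam M j + M %/ Lam j <= M)%N.
  apply: leq_trans (Amono Lam M (ltn_ord j)) _.
  rewrite -[X in (_ <= X)%N](hsN M LM); apply: eq_leq; apply: eq_bigl => k.
  exact: ltn_ord.
pose Nk k := (M * 2 ^ k)%N.
exists Nk; split.
  split; first by rewrite /Nk expn0 muln1.
  split.
    move=> k; rewrite /Nk expnS mulnCA; split; first by apply: dvdn_mull.
    by rewrite mulnK // muln_gt0 M0 expn_gt0.
  move=> j; rewrite /Nk expn0 muln1; split.
    exists (Aof Lam M j); split; last exact: hle.
    by apply: leq_trans (Ale j); apply: leq_addr.
  exists (Aof Lam M j + M %/ Lam j)%N; split => //.
  rewrite (hle M j) // natrD mulrDl natf_div // mulrAC divff ?mul1r //.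
  by rewrite pnatr_eq0 -lt0n.
move=> k; set N := Nk k.
have dvN b : (Lam b %| N)%N by apply: dvdn_mulr.
have N0 : (0 < N)%N by rewrite muln_gt0 M0 expn_gt0.
exists (Vm R Lam N p g h)^T; split.
  have HV := Vm_unitary R hp hpL Lpos dvN hg hh hgh (hsN N dvN).
  rewrite /unitary_mx -map_trmx trmxK.
  by rewrite -[RHS]trmx1 -(mulmx1C HV) trmx_mul trmxK.
move=> i j.
have [b ib] := inb_exists (hsN N dvN) (ltn_ord i).
rewrite mxE (Vm_norm R g h hp hpL Lpos j ib).
rewrite (@Bmat_val _ _ _ _ hT N b (Aof Lam N b) i j (dvN b) (hle N b dvN N0) ib) complexr0.
by case: ifP => _; [rewrite fmorphV rmorph_nat | rewrite rmorph0].
Qed.
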